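(* Let $m\ge2$ and $t\ge1$ be integers. There exists $a\in\{1,2,\dots,m\}$ with $f_2^t(a)=a$ if and only if $\gcd(m+1,2^t+1)>1$ or $\gcd(m+1,2^t-1)>1$. Moreover, every $a\in\{1,\dots,m\}$ with $f_2^t(a)=a$ can be written as $a=\frac{\xi(m+1)}{2^t+1}$ or $a=\frac{\xi(m+1)}{2^t-1}$ for some odd integer $\xi$ with $1\le\xi<2^t$.
   Context: For an integer $m\ge2$, $X=\{0,1,\dots,m^2-1\}$, each element written with exactly two base-$m$ digits (leading zeros allowed), and $f(x)=D(x)-A(x)$ is the two-digit base-$m$ Kaprekar map ($D(x)$, $A(x)$: digits of $x$ in nonincreasing, resp. nondecreasing, order). The map $f_2:\{0,1,\dots,m\}\to\{0,1,\dots,m\}$ is defined by $f(a(m-1))=f_2(a)(m-1)$; explicitly $f_2(0)=0$ and $f_2(a)=|2a-m-1|$ for $1\le a\le m$. $f_2^t$ denotes the $t$-fold iterate. *)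

(* Defs.v *)
From mathcomp Require Import all_boot.

(* f_2 : {0..m} -> {0..m}, f_2(0) = 0, f_2(a) = |2a - m - 1| for 1 <= a <= m.
   The absolute difference on nat is written as the sum of the two truncated
   differences. *)
Definition absdiff (x y : nat) : nat := (x - y) + (y - x).

Definition f2 (m a : nat) : nat :=
  if a == 0 then 0 else absdiff (2 * a) (m + 1).

Definition f2_iter (m t a : nat) : nat := iter t (f2 m) a.

(* Main.v *)
From Stdlib Require Import ZArith Lia.
Require Import Defs.
From mathcomp Require Import all_boot zify.
Open Scope nat_scope.
Lemma f2Z (m b : nat) : 1 <= b <= m -> Z.of_nat (f2 m b) = Z.abs (2 * Z.of_nat b - Z.of_nat m - 1).
Proof. move=> /andP[h1 h2]; rewrite /f2; case: eqP => [E|E]; first lia. rewrite /absdiff; lia. Qed.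
Lemma f2_le m b : b <= m -> f2 m b <= m.
Proof. move=> h; rewrite /f2; case: eqP => [E|E]; first lia. rewrite /absdiff; lia. Qed.
Lemma iter_le m k b : b <= m -> f2_iter m k b <= m.
Proof. move=> h; elim: k => [|k IH] //=. exact: f2_le. Qed.
Lemma iter0 m k : f2_iter m k 0 = 0.
Proof. by elim: k => //= k ->. Qed.

Lemma form m b k : b <= m -> 0 < f2_iter m k b ->
  exists s c, (s = 1 \/ s = -1)%Z /\ (c = 0 \/ exists e, c = 2 * e + 1)%Z /\
    Z.of_nat (f2_iter m k b) = (s * Z.of_nat (2 ^ k * b) + c * Z.of_nat (m + 1))%Z.
Proof.
move=> hb; elim: k => [|k IH].
  move=> _; exists 1%Z, 0%Z; split; [left|split;[left|]] => //. rewrite expn0 mul1n. change (f2_iter m 0 b) with b. lia.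
rewrite /f2_iter iterS => hp. rewrite /f2_iter in IH.
have hy : 0 < iter k (f2 m) b.
  by case: (iter k (f2 m) b) hp.
have hyl : iter k (f2 m) b <= m by apply: iter_le.
have [s [c [hs [hc He]]]] := IH hy.
rewrite f2Z; last by rewrite hy hyl.
rewrite /f2_iter in He.
rewrite expnS -mulnA.
set X := 2 ^ k * b in He *.
set y := iter k (f2 m) b in He hy hyl *.
have H2 : Z.of_nat (2 * X) = (2 * Z.of_nat X)%Z by lia.
rewrite H2.
case: (Z.le_gt_cases 0 (2 * Z.of_nat y - Z.of_nat m - 1)) => hsg.
- exists s, (2 * c - 1)%Z; split => //; split.
    right; case: hc => [->|[e ->]]; [exists (-1)%Z|exists (2*e)%Z]; lia.
  case: hs => E; subst s; lia.
- exists (- s)%Z, (1 - 2 * c)%Z; split; first lia. split.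
    right; case: hc => [->|[e ->]]; [exists 0%Z|exists (-2*e-1)%Z]; lia.
  case: hs => E; subst s; lia.
Qed.

Lemma pow_even t : 1 <= t -> exists2 R, 2 ^ t = 2 * R & 0 < R.
Proof. move=> ht; exists (2 ^ t.-1); last by rewrite expn_gt0. by rewrite -expnS prednK. Qed.

Lemma part2 m t a : 2 <= m -> 1 <= t -> 1 <= a <= m -> f2_iter m t a = a ->
  exists xi, [/\ odd xi, 1 <= xi < 2 ^ t &
        (a * (2 ^ t + 1) = xi * (m + 1) \/ a * (2 ^ t - 1) = xi * (m + 1))].
Proof.
move=> hm ht /andP[ha1 ha2] hfix.
have [s [c [hs [hc He]]]] := form m a t ha2 (ltac:(by rewrite hfix)).
rewrite hfix in He.
have [R hR hR0] := pow_even t ht.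
rewrite hR in He *.
case: hc => [E|[e E]]; subst c.
  exfalso; case: hs => E; subst s; nia.
case: hs => E; subst s.
- have he : (e < 0)%Z by nia.
  exists (2 * Z.to_nat (- e - 1) + 1).
  have hn : Z.of_nat (Z.to_nat (- e - 1)) = (- e - 1)%Z by rewrite Z2Nat.id; lia.
  move: (Z.to_nat (-e-1)) hn => n hn.
  have he2 : e = (- Z.of_nat n - 1)%Z by lia.
  subst e.
  split; first by rewrite addn1 oddS oddM.
    apply/andP; split; [lia|nia].
  right; nia.
- have he : (0 <= e)%Z by nia.
  exists (2 * Z.to_nat e + 1).
  have hn : Z.of_nat (Z.to_nat e) = e by rewrite Z2Nat.id; lia.
  move: (Z.to_nat e) hn => n hn. subst e.
  split; first by rewrite addn1 oddS oddM.
    apply/andP; split; [lia|nia].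
  left; nia.
Qed.

Lemma mult m d g h k j : m + 1 = d * g -> g = 2 * h + 1 -> 0 < j < g ->
  exists j', f2_iter m k (j * d) = j' * d /\ 0 < j' < g.
Proof.
move=> hN hg hj; elim: k => [|k [j' [E hj']]].
  by exists j.
exists (absdiff (2 * j') g).
rewrite /f2_iter iterS -/(f2_iter m k (j * d)) E.
have hd : 0 < d by nia.
rewrite /f2.
case: eqP => [E0|_]; first nia.
split.
  rewrite hN /absdiff mulnDl !mulnBl mulnA (mulnC d g). by [].
rewrite /absdiff; lia.
Qed.

Lemma close (u N y d : Z) : (0 < d < N -> 0 < y < N -> y = u * N + d \/ y = u * N - d ->
  y = d \/ y = N - d)%Z.
Proof.
move=> hd hy [E|E].
- left. have : u = 0%Z by nia. move=> hu; subst u; lia.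
- right. have : u = 1%Z by nia. move=> hu; subst u; lia.
Qed.

Lemma back m t Q (dl : Z) : 2 <= m -> 1 <= t ->
  Z.of_nat Q = (Z.of_nat (2 ^ t) + dl)%Z -> (dl = 1 \/ dl = -1)%Z ->
  1 < gcdn (m + 1) Q -> exists a, 1 <= a <= m /\ f2_iter m t a = a.
Proof.
move=> hm ht hQ hdl hg1.
set g := gcdn (m + 1) Q in hg1.
have [R hR hR0] := pow_even t ht.
have hQodd : odd Q.
  have [q hq] : exists q, Q = 2 * q + 1.
    case: hdl => E; subst dl; [exists R | exists (R - 1)]; lia.
  by rewrite hq addn1 oddS oddM.
have hgodd : odd g.
  apply/negPn/negP => hev.
  have h2 : 2 %| Q by apply: dvdn_trans (dvdn_gcdr (m + 1) Q); rewrite dvdn2.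
  by rewrite dvdn2 hQodd in h2.
have [h hh] : exists h, g = 2 * h + 1.
  exists g./2. have := odd_double_half g. rewrite hgodd. lia.
have hN : m + 1 = (m + 1) %/ g * g by rewrite divnK // dvdn_gcdl.
have hQg : Q = Q %/ g * g by rewrite divnK // dvdn_gcdr.
set d := (m + 1) %/ g in hN.
set r := Q %/ g in hQg.
have hd : 0 < d by nia.
have [j [Ej hj]] := mult m d g h t 1 hN hh (ltac:(lia)).
rewrite mul1n in Ej.
have [j1 [Ej1 hj1]] := mult m d g h 1 1 hN hh (ltac:(lia)).
rewrite mul1n in Ej1.
have hdm : d <= m by nia.
have [s [c [hs [hc He]]]] := form m d t hdm (ltac:(rewrite Ej; nia)).
rewrite Ej in He.
have hy : (Z.of_nat (j * d) = Z.of_nat d \/ Z.of_nat (j * d) = Z.of_nat (m + 1) - Z.of_nat d)%Z.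
  have hP : Z.of_nat (2 ^ t) = (Z.of_nat r * Z.of_nat g - dl)%Z.
    clear -hQ hQg. rewrite hQg Nat2Z.inj_mul in hQ. lia.
  have hNZ : Z.of_nat (m + 1) = (Z.of_nat d * Z.of_nat g)%Z by rewrite hN Nat2Z.inj_mul.
  have hPd : Z.of_nat (2 ^ t * d) = (Z.of_nat r * Z.of_nat (m + 1) - dl * Z.of_nat d)%Z.
    rewrite Nat2Z.inj_mul hP hNZ. ring.
  rewrite hPd in He.
  have hjd : j * d < m + 1 by rewrite hN [j * d]mulnC ltn_pmul2l //; case/andP: hj.
  have hdN : d < m + 1 by rewrite hN -{1}(muln1 d) ltn_pmul2l.
  clear -He hjd hdN hd hj hs hdl.
  apply: (close (s * Z.of_nat r + c)); [lia|lia|].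
  case: hs => E; subst s; case: hdl => E; subst dl; [right|left|left|right]; lia.
exists (f2 m d); split.
  apply/andP; split; last exact: f2_le.
  change (f2 m d) with (f2_iter m 1 d). rewrite Ej1 muln_gt0 hd andbT. by case/andP: hj1.
rewrite /f2_iter -iterSr iterS -/(f2_iter m t d) Ej.
have hd0 : (d == 0) = false by case: d hd {hN Ej Ej1 hdm He hy}.
have hj0 : (j * d == 0) = false by rewrite muln_eq0 hd0 orbF; case: j hj {Ej He hy}.
rewrite /f2 hd0 hj0 /absdiff.
move: hy; move: (j * d) => y; clear; lia.
Qed.

Lemma gcd_big N Q a xi : 0 < a < N -> a * Q = xi * N -> 1 < gcdn N Q.
Proof.
move=> /andP[ha haN] E.
rewrite ltnNge; apply/negP => hg.
have hcop : coprime N Q.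
  rewrite /coprime eqn_leq hg /= gcdn_gt0; apply/orP; left; lia.
have : N %| a * Q by rewrite E dvdn_mull.
rewrite Gauss_dvdl // => hd.
have := dvdn_leq ha hd. lia.
Qed.

Theorem theorem3p3p1 (m t : nat) (hm : 2 <= m) (ht : 1 <= t) :
  ((exists a, 1 <= a <= m /\ f2_iter m t a = a) <->
     (1 < gcdn (m + 1) (2 ^ t + 1) \/ 1 < gcdn (m + 1) (2 ^ t - 1)))
  /\
  (forall a, 1 <= a <= m -> f2_iter m t a = a ->
     exists xi, [/\ odd xi, 1 <= xi < 2 ^ t &
        (a * (2 ^ t + 1) = xi * (m + 1) \/ a * (2 ^ t - 1) = xi * (m + 1))]).
Proof.
split; last by move=> a; exact: part2.
split.
  move=> [a [ha hf]].
  have [xi [_ _ [E|E]]] := part2 m t a hm ht ha hf.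
    left; apply: (gcd_big _ _ a xi) E; lia.
  right; apply: (gcd_big _ _ a xi) E; lia.
have hP : 0 < 2 ^ t by rewrite expn_gt0.
case=> hg.
  apply: (back m t (2 ^ t + 1) 1%Z) => //; [lia|by left].
apply: (back m t (2 ^ t - 1) (-1)%Z) => //; [lia|by right].
Qed.
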